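(* Let $n\geq 1$, let $G_1,\dots,G_n$ be groups, and let $G\leqslant G_1\times\dots\times G_n$ be a subgroup such that each projection $\pi_i:G\to G_i$ ($1\leqslant i\leqslant n$) is surjective. Then $G$ is a normal subgroup of $G_1\times\dots\times G_n$ if and only if $G$ has abelian entanglements with respect to $G_1\times\dots\times G_n$.
   Context: For a nonempty subset $S\subseteq\{1,\dots,n\}$, let $G_S$ denote the image of $G$ under the projection $G_1\times\dots\times G_n\to\prod_{i\in S}G_i$. For a partition $\mathcal{P}=\{S,T\}$ of $\{1,\dots,n\}$ into two nonempty sets, $G$ is naturally a subgroup of $G_S\times G_T$ surjecting onto both factors; put $N_S=\{x\in G_S:(x,1)\in G\}$, which is a normal subgroup of $G_S$, and define the Goursat quotient $Q_{\mathcal{P}}:=G_S/N_S$ (it is isomorphic to $G_T/N_T$, and $G=\{(x,y)\in G_S\times G_T:\psi_1(x)=\psi_2(y)\}$ for suitable surjections $\psi_1:G_S\to Q_{\mathcal P}$, $\psi_2:G_T\to Q_{\mathcal P}$). $G$ is said to have abelian entanglements with respect to $G_1\times\dots\times G_n$ if $Q_{\mathcal{P}}$ is abelian for every such two-set partition $\mathcal{P}$. *)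

(* Defs.v *)
From mathcomp Require Import all_boot.
Set Implicit Arguments. Unset Strict Implicit. Unset Printing Implicit Defensive.

Record group := Group {
  carrier :> Type;
  gmul : carrier -> carrier -> carrier;
  ginv : carrier -> carrier;
  gone : carrier;
  gmulA : forall x y z, gmul x (gmul y z) = gmul (gmul x y) z;
  gmul1 : forall x, gmul gone x = x;
  gmulV : forall x, gmul (ginv x) x = gone }.

Definition dprodT (I : Type) (Gs : I -> group) := forall i, carrier (Gs i).
Definition dmul I (Gs : I -> group) (x y : dprodT Gs) : dprodT Gs :=
  fun i => gmul (x i) (y i).
Definition dinv I (Gs : I -> group) (x : dprodT Gs) : dprodT Gs :=
  fun i => ginv (x i).
Definition done_ I (Gs : I -> group) : dprodT Gs := fun i => gone (Gs i).

Definition is_subgroup I (Gs : I -> group) (H : dprodT Gs -> Prop) : Prop :=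
  [/\ H (done_ Gs),
      forall x y, H x -> H y -> H (dmul x y)
    & forall x, H x -> H (dinv x)].

Definition is_normal I (Gs : I -> group) (H : dprodT Gs -> Prop) : Prop :=
  forall g x, H x -> H (dmul (dinv g) (dmul x g)).

Definition proj_surjective I (Gs : I -> group) (H : dprodT Gs -> Prop) : Prop :=
  forall i (a : Gs i), exists x, H x /\ x i = a.

Section Entangle.
Variables (n : nat) (Gs : 'I_n -> group) (H : dprodT Gs -> Prop) (S : {set 'I_n}).

Definition GsS : {i : 'I_n | i \in S} -> group := fun i => Gs (sval i).
Definition projS (x : dprodT Gs) : dprodT GsS := fun i => x (sval i).

Definition G_S (y : dprodT GsS) : Prop := exists x, H x /\ projS x = y.

(* N_S = { y in G_S : (y, 1) in G }. *)
Definition N_S (y : dprodT GsS) : Prop :=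
  G_S y /\ exists x, [/\ H x, projS x = y & forall i, i \notin S -> x i = gone (Gs i)].

End Entangle.
Arguments GsS : clear implicits.
Arguments projS : clear implicits.
Arguments G_S : clear implicits.
Arguments N_S : clear implicits.

Definition lcoset I (Gs : I -> group) (N : dprodT Gs -> Prop) (a : dprodT Gs) :
  dprodT Gs -> Prop := fun z => exists m, N m /\ z = dmul a m.
Definition setmul I (Gs : I -> group) (A B : dprodT Gs -> Prop) :
  dprodT Gs -> Prop := fun z => exists a b, [/\ A a, B b & z = dmul a b].

(* The Goursat quotient G_S / N_S is abelian: any two of its elements
   (cosets a N_S, b N_S with a, b in G_S) commute under the quotient
   (set-product) multiplication. *)
Definition goursat_quotient_abelian n (Gs : 'I_n -> group)
    (H : dprodT Gs -> Prop) (S : {set 'I_n}) : Prop :=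
  forall a b, G_S n Gs H S a -> G_S n Gs H S b ->
    forall z, setmul (lcoset (N_S n Gs H S) a) (lcoset (N_S n Gs H S) b) z <->
              setmul (lcoset (N_S n Gs H S) b) (lcoset (N_S n Gs H S) a) z.

Definition abelian_entanglements n (Gs : 'I_n -> group) (H : dprodT Gs -> Prop) : Prop :=
  forall S : {set 'I_n}, S != set0 -> ~: S != set0 -> goursat_quotient_abelian H S.

(* Main.v *)
Require Import Defs.
From Stdlib Require Import FunctionalExtensionality.
From mathcomp Require Import all_boot.
Set Implicit Arguments. Unset Strict Implicit. Unset Printing Implicit Defensive.

Section GroupLaws.
Variable K : group.
Implicit Types x y z : K.
Lemma mulgV' x : gmul x (ginv x) = gone K.
Proof.
have e : gmul x (ginv x) = gmul (gone K) (gmul x (ginv x)) by rewrite gmul1.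
rewrite e -{1}(gmulV (ginv x)) -gmulA (gmulA (ginv x)) gmulV gmul1.
exact: gmulV.
Qed.
Lemma mulg1 x : gmul x (gone K) = x.
Proof. by rewrite -(gmulV x) gmulA mulgV' gmul1. Qed.
Lemma mulKg x y : gmul (ginv x) (gmul x y) = y.
Proof. by rewrite gmulA gmulV gmul1. Qed.
Lemma mulKVg x y : gmul x (gmul (ginv x) y) = y.
Proof. by rewrite gmulA mulgV' gmul1. Qed.
Lemma inv1 : ginv (gone K) = gone K.
Proof. by rewrite -[LHS]mulg1 gmulV. Qed.
Lemma key a b m m' : gmul (gmul a m) (gmul b m') =
  gmul (gmul b (gone K)) (gmul a (gmul (gmul (ginv a) (gmul (ginv b) (gmul a b)))
     (gmul (gmul (ginv b) (gmul m b)) m'))).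
Proof. by rewrite mulg1 -!gmulA !mulKVg. Qed.
End GroupLaws.

Definition conjd I (Gs : I -> group) (g x : dprodT Gs) := dmul (dinv g) (dmul x g).

Ltac funext j := apply functional_extensionality_dep; intro j.

Lemma fwd n Gs (G : dprodT Gs -> Prop) (S : {set 'I_n}) a b z :
  is_subgroup G -> is_normal G -> G_S n Gs G S a -> G_S n Gs G S b ->
  setmul (lcoset (N_S n Gs G S) a) (lcoset (N_S n Gs G S) b) z ->
  setmul (lcoset (N_S n Gs G S) b) (lcoset (N_S n Gs G S) a) z.
Proof.
rewrite /is_subgroup; move=> [G1 GM GV] Gn [xa [Gxa <-]] [xb [Gxb <-]]
  [a' [b' [[m [[_ [u [Gu <- u1]]] ->]] [m' [[_ [u' [Gu' <- u1']]] ->]] ->]]].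
pose beta := fun j => if j \in S then xb j else gone (Gs j).
pose v := dmul (dmul (dinv xa) (conjd beta xa)) (dmul (conjd beta u) u').
have Gv : G v.
  apply: (GM); [apply: (GM) => //; [exact: (GV) | exact: (Gn)] | apply: (GM) => //; exact: (Gn)].
have N1 : N_S n Gs G S (done_ (GsS n Gs S)).
  split; [exists (done_ Gs); split => // | exists (done_ Gs); split => //].
exists (dmul (projS n Gs S xb) (done_ _)), (dmul (projS n Gs S xa) (projS n Gs S v)).
split.
- by exists (done_ _); split.
- exists (projS n Gs S v); split => //; split; first by exists v.
  exists v; split => // j jS.
  rewrite /v /conjd /dmul /dinv /beta (negbTE jS) u1 // u1' // inv1 !mulg1 !gmul1; exact: gmulV.
- funext i; rewrite /v /conjd /dmul /dinv /beta /projS (svalP i).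
  exact: key.
Qed.

Lemma single n Gs (G : dprodT Gs -> Prop) (i : 'I_n) y x :
  is_subgroup G -> abelian_entanglements G -> G y -> G x ->
  G (conjd (fun j => if j == i then y j else gone (Gs j)) x).
Proof.
rewrite /is_subgroup; move=> [G1 GM GV] Hab Gy Gx.
have [Sc|Sc] := eqVneq (~: [set i]) set0.
  have allI : forall j, j = i.
    move=> j; apply/eqP.
    have: j \notin ~: [set i] by rewrite Sc inE.
    by rewrite inE in_set1 negbK.
  have -> : conjd (fun j => if j == i then y j else gone (Gs j)) x = conjd y x.
    funext j; rewrite /conjd /dmul /dinv.
    case: eqP => // ne; exfalso; exact: ne (allI j).
  by apply: (GM); [exact: (GV) | exact: (GM)].
set S := [set i].
have S0 : S != set0 by apply/set0Pn; exists i; rewrite inE.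
have i0 : i \in S by rewrite inE.
have GSa : G_S n Gs G S (projS n Gs S x) by exists x.
have GSb : G_S n Gs G S (projS n Gs S y) by exists y.
have N1 : N_S n Gs G S (done_ (GsS n Gs S)).
  split; [exists (done_ Gs); split => // | exists (done_ Gs); split => //].
have := (Hab S S0 Sc _ _ GSa GSb (dmul (projS n Gs S x) (projS n Gs S y))).1.
case.
  exists (projS n Gs S x), (projS n Gs S y); split => //;
    exists (done_ _); split => //; funext k; by rewrite /dmul /done_ mulg1.
move=> a' [b' [[m [[_ [u [Gu <- u1]]] ->]] [m' [[_ [u' [Gu' <- u1']]] ->]] E]].
have Ei := congr1 (fun f => f (exist _ i i0)) E.
rewrite /= /dmul /projS /= in Ei.
have : G (dmul u (dmul x u')) by apply: (GM) => //; apply: (GM).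
suff -> : conjd (fun j => if j == i then y j else gone (Gs j)) x = dmul u (dmul x u') by [].
funext j; rewrite /conjd /dmul /dinv.
case: eqP => [->|ne].
  by rewrite Ei -gmulA mulKg.
have jS : j \notin S by rewrite inE; apply/eqP.
by rewrite u1 // u1' // inv1 mulg1 !gmul1.
Qed.

Lemma conj_all n Gs (G : dprodT Gs -> Prop)
  (Hs : forall (i : 'I_n) y x, G y -> G x ->
      G (conjd (fun j => if j == i then y j else gone (Gs j)) x))
  (surj : proj_surjective G) :
  forall k g x, (forall j : 'I_n, k <= j -> g j = gone (Gs j)) -> G x -> G (conjd g x).
Proof.
elim=> [|k IH] g x Hg Gx.
  have -> : conjd g x = x.
    by funext j; rewrite /conjd /dmul /dinv Hg // inv1 gmul1 mulg1.
  by [].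
case: (ltnP k n) => [kn|kn]; last first.
  apply: IH => // j kj; exfalso.
  by have := leq_trans (ltn_ord j) (leq_trans kn kj); rewrite ltnn.
pose i := Ordinal kn.
have [y [Gy yi]] := surj i (g i).
pose g' := fun j => if j == i then gone (Gs j) else g j.
have Gg' : G (conjd g' x).
  apply: IH => // j kj; rewrite /g'; case: eqP => // ne; apply: Hg.
  rewrite ltn_neqAle kj andbT; apply/eqP => e; apply: ne; apply: val_inj.
  by rewrite /= e.
have := Hs i y (conjd g' x) Gy Gg'.
suff -> : conjd g x = conjd (fun j => if j == i then y j else gone (Gs j)) (conjd g' x) by [].
funext j; rewrite /conjd /dmul /dinv /g'.
case: eqP => [->|ne].
  by rewrite yi inv1 gmul1 mulg1.
by rewrite inv1 mulg1 gmul1.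
Qed.

Theorem proposition2p3 (n : nat) (Gs : 'I_n -> group) (G : dprodT Gs -> Prop) :
  0 < n ->
  is_subgroup G ->
  proj_surjective G ->
  (is_normal G <-> abelian_entanglements G).
Proof.
move=> _ Hsub Hsurj; split.
  move=> Hn S _ _ a b GSa GSb z; split; exact: fwd.
move=> Hab g x Gx.
apply: (@conj_all n Gs G _ Hsurj n) => //.
  by move=> i y x' Gy Gx'; apply: single.
by move=> j; rewrite leqNgt ltn_ord.
Qed.
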